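(* Fix $p\in[0,\infty]$, a dynamic monetary risk measure $(R_t)_{t=0}^{T-1}$, a dynamic monetary utility function $(U_t)_{t=0}^{T-1}$, $\eta_t\in L^0(\mathcal{F}_t)$ with $\eta_t>0$, and $W_t$ as in the context. For $t\in\{1,\dots,T\}$ define $\phi_{t,T}:\mathcal{R}^p_{t,T}\to L^p(\mathcal{F}_t)$ by $$\phi_{t,T}(Y):=-W_t\circ\dots\circ W_{T-1}(-Y_T)$$ (for $t=T$ the empty composition is the identity). Then each $\phi_{t,T}$ satisfies: $\phi_{t,T}(0)=0$; $\phi_{t,T}(Y)\le\phi_{t,T}(\widetilde Y)$ for all $Y,\widetilde Y\in\mathcal{R}^p_{t,T}$ with $Y\le\widetilde Y$ (componentwise); and $\phi_{t,T}(Y+m1_{[t,T]})=\phi_{t,T}(Y)+m$ for all $Y\in\mathcal{R}^p_{t,T}$ and $m\in L^p(\mathcal{F}_t)$. Moreover, $(\phi_{t,T})_{t=1}^T$ is time-consistent in the sense that $$\phi_{t,T}(Y)=\phi_{t,T}\big(Y1_{[t,u)}+\phi_{u,T}(Y)1_{[u,T]}\big)$$ for every $t\le u\le T$ and all $Y\in\mathcal{R}^p_{t,T}$.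
   Context: Let $T\ge 1$ and $(\Omega,\mathcal{F},\mathbb{F},\mathbb{P})$ a filtered probability space with $\mathbb{F}=(\mathcal{F}_t)_{t=0}^T$, $\{\emptyset,\Omega\}=\mathcal{F}_0\subseteq\dots\subseteq\mathcal{F}_T=\mathcal{F}$. $L^0(\mathcal{F}_t)$: real $\mathcal{F}_t$-measurable random variables; $L^p(\mathcal{F}_t)$ ($p\in(0,\infty)$): those with $\mathbb{E}|Y|^p<\infty$; $L^\infty(\mathcal{F}_t)$: essentially bounded ones; $L^p_+$: nonnegative elements. (In)equalities are a.s.; $x_+=\max(x,0)$. A dynamic monetary risk measure: maps $R_t:L^p(\mathcal{F}_{t+1})\to L^p(\mathcal{F}_t)$, $t=0,\dots,T-1$, with $R_t(Y+\lambda)=R_t(Y)-\lambda$ ($\lambda\in L^p(\mathcal{F}_t)$), $Y\le\widetilde Y\Rightarrow R_t(Y)\ge R_t(\widetilde Y)$, $R_t(cY)=cR_t(Y)$ ($c\in L^p_+(\mathcal{F}_t)$). A dynamic monetary utility function: maps $U_t:L^p(\mathcal{F}_{t+1})\to L^p(\mathcal{F}_t)$ with $U_t(Y+\lambda)=U_t(Y)+\lambda$, $Y\le\widetilde Y\Rightarrow U_t(Y)\le U_t(\widetilde Y)$, $U_t(cY)=cU_t(Y)$. $W_t(Y):=R_t(-Y)-\frac{1}{1+\eta_t}U_t((R_t(-Y)-Y)_+)$ for $Y\in L^p(\mathcal{F}_{t+1})$. $\mathcal{R}^p_{1,T}$ is the space of $\mathbb{F}$-adapted processes $(Y_s)_{s=1}^T$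 with $Y_s\in L^p(\mathcal{F}_s)$. For $1\le u\le v\le T$, $\pi_{u,v}:\mathcal{R}^p_{1,T}\to\mathcal{R}^p_{1,T}$ is $\pi_{u,v}(Y)_s:=1_{u\le s}Y_{s\wedge v}$, and $\mathcal{R}^p_{u,v}:=\pi_{u,v}\mathcal{R}^p_{1,T}$. For a process $Y$ and an interval $I$, $Y1_I$ is the process $s\mapsto 1_{s\in I}Y_s$, and for a random variable $m$, $m1_I$ is the process $s\mapsto 1_{s\in I}m$. *)

(* Defs.v *)
From HB Require Import structures.
From mathcomp Require Import all_boot all_order all_algebra.
From mathcomp Require Import all_classical all_reals all_analysis.
Set Implicit Arguments. Unset Strict Implicit. Unset Printing Implicit Defensive.
Import Order.TTheory GRing.Theory Num.Theory.
Local Open Scope classical_set_scope.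
Local Open Scope ring_scope.

Section Defs.
Context (d : measure_display) (Omega : measurableType d) (R : realType)
        (P : probability Omega R).

Definition G_meas (G : set (set Omega)) (Y : Omega -> R) : Prop :=
  forall B : set R, measurable B -> G (Y @^-1` B).

Definition is_filtration (T : nat) (F : nat -> set (set Omega)) : Prop :=
  [/\ forall t, (t <= T)%N -> sigma_algebra setT (F t),
      F 0%N = [set set0; setT],
      (forall s t, (s <= t)%N -> (t <= T)%N -> F s `<=` F t) &
      F T = measurable].

(* Y in L^p(G), p in [0, +oo]: p = 0 gives L^0, p = +oo essentially bounded. *)
Definition Lp (G : set (set Omega)) (p : \bar R) (Y : Omega -> R) : Prop :=
  G_meas G Y /\
  match p with
  | +oo%E => exists M : R, {ae P, forall w, `|Y w| <= M}
  | EFin r => (0 < r) -> (\int[P]_w (`|Y w| `^ r)%:E < +oo)%E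
  | -oo%E => False
  end.

Definition dyn_risk_measure (T : nat) (F : nat -> set (set Omega)) (p : \bar R)
    (Rm : nat -> (Omega -> R) -> (Omega -> R)) : Prop :=
  forall t, (t < T)%N ->
  [/\ (forall Y, Lp (F t.+1) p Y -> Lp (F t) p (Rm t Y)),
      (forall Y lam, Lp (F t.+1) p Y -> Lp (F t) p lam ->
         {ae P, forall w, Rm t (fun x => Y x + lam x) w = Rm t Y w - lam w}),
      (forall Y Y', Lp (F t.+1) p Y -> Lp (F t.+1) p Y' ->
         {ae P, forall w, Y w <= Y' w} ->
         {ae P, forall w, Rm t Y' w <= Rm t Y w}) &
      (forall Y c, Lp (F t.+1) p Y -> Lp (F t) p c -> {ae P, forall w, 0 <= c w} ->
         Lp (F t.+1) p (fun x => c x * Y x) ->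
         {ae P, forall w, Rm t (fun x => c x * Y x) w = c w * Rm t Y w})].

Definition dyn_utility (T : nat) (F : nat -> set (set Omega)) (p : \bar R)
    (U : nat -> (Omega -> R) -> (Omega -> R)) : Prop :=
  forall t, (t < T)%N ->
  [/\ (forall Y, Lp (F t.+1) p Y -> Lp (F t) p (U t Y)),
      (forall Y lam, Lp (F t.+1) p Y -> Lp (F t) p lam ->
         {ae P, forall w, U t (fun x => Y x + lam x) w = U t Y w + lam w}),
      (forall Y Y', Lp (F t.+1) p Y -> Lp (F t.+1) p Y' ->
         {ae P, forall w, Y w <= Y' w} ->
         {ae P, forall w, U t Y w <= U t Y' w}) &
      (forall Y c, Lp (F t.+1) p Y -> Lp (F t) p c -> {ae P, forall w, 0 <= c w} ->
         Lp (F t.+1) p (fun x => c x * Y x) ->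
         {ae P, forall w, U t (fun x => c x * Y x) w = c w * U t Y w})].

(* processes (Y_s)_{s=1}^T, indexed by nat (values outside 1..T irrelevant) *)
Definition in_Rp (T : nat) (F : nat -> set (set Omega)) (p : \bar R)
    (t : nat) (Y : nat -> Omega -> R) : Prop :=
  forall s, (1 <= s <= T)%N ->
    Lp (F s) p (Y s) /\ ((s < t)%N -> {ae P, forall w, Y s w = 0}).

End Defs.

Definition Wop {Omega : Type} {R : realType}
    (Rm U : nat -> (Omega -> R) -> (Omega -> R)) (eta : nat -> Omega -> R)
    (t : nat) (Y : Omega -> R) : Omega -> R :=
  fun w => Rm t (fun x => - Y x) w
           - (1 + eta t w)^-1 *
             U t (fun x => Num.max (Rm t (fun y => - Y y) x - Y x) 0) w.

Fixpoint Wcomp_aux {Omega : Type} {R : realType}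
    (Rm U : nat -> (Omega -> R) -> (Omega -> R)) (eta : nat -> Omega -> R)
    (k t : nat) (Y : Omega -> R) : Omega -> R :=
  match k with
  | 0%N => Y
  | k'.+1 => Wop Rm U eta t (Wcomp_aux Rm U eta k' t.+1 Y)
  end.

Definition phi {Omega : Type} {R : realType}
    (Rm U : nat -> (Omega -> R) -> (Omega -> R)) (eta : nat -> Omega -> R)
    (T t : nat) (Y : nat -> Omega -> R) : Omega -> R :=
  fun w => - Wcomp_aux Rm U eta (T - t) t (fun x => - Y T x) w.

Definition ind_cc {Omega : Type} {R : realType} (a b : nat) (m : Omega -> R)
  : nat -> Omega -> R := fun s w => if (a <= s <= b)%N then m w else 0.
Definition proc_co {Omega : Type} {R : realType} (a b : nat) (Y : nat -> Omega -> R)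
  : nat -> Omega -> R := fun s w => if (a <= s < b)%N then Y s w else 0.
Definition proc_add {Omega : Type} {R : realType} (Y Z : nat -> Omega -> R)
  : nat -> Omega -> R := fun s w => Y s w + Z s w.

(* Main.v *)
Require Import Defs.
From HB Require Import structures.
From mathcomp Require Import all_boot all_order all_algebra.
From mathcomp Require Import all_classical all_reals all_analysis.
From mathcomp Require Import measurable_realfun.
From mathcomp Require Import ring lra zify.
Import Order.TTheory GRing.Theory Num.Theory.
Set Implicit Arguments. Unset Strict Implicit. Unset Printing Implicit Defensive.
Local Open Scope classical_set_scope.
Local Open Scope ring_scope.

Lemma measurable_inv (R : realType) : measurable_fun setT (@GRing.inv R).
Proof.
have -> : [set: R] = ~` [set 0] `|` [set 0] by rewrite setUC setUCr.
apply/measurable_funU.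
- by apply: measurableC.
- by [].
split; last exact: measurable_fun_set1.
apply: open_continuous_measurable_fun.
  rewrite openC; apply: compact_closed; [exact: Rhausdorff|exact: compact_set1].
by move=> x; rewrite inE => /eqP x0; exact: inv_continuous.
Qed.

Lemma filterS4 (T : Type) (F : set_system T) : Filter F ->
  forall P1 P2 P3 P4 Q : set T, (forall x, P1 x -> P2 x -> P3 x -> P4 x -> Q x) ->
  F P1 -> F P2 -> F P3 -> F P4 -> F Q.
Proof.
move=> FF P1 P2 P3 P4 Q h f1 f2 f3 f4.
have f12 : F (fun x => P1 x /\ P2 x) by apply: filterS2 f1 f2 => x a b.
by apply: filterS3 f12 f3 f4 => x [a b]; exact: h.
Qed.

Lemma filterS5 (T : Type) (F : set_system T) : Filter F ->
  forall P1 P2 P3 P4 P5 Q : set T,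
  (forall x, P1 x -> P2 x -> P3 x -> P4 x -> P5 x -> Q x) ->
  F P1 -> F P2 -> F P3 -> F P4 -> F P5 -> F Q.
Proof.
move=> FF P1 P2 P3 P4 P5 Q h f1 f2 f3 f4 f5.
have f12 : F (fun x => P1 x /\ P2 x) by apply: filterS2 f1 f2 => x a b.
by apply: filterS4 f12 f3 f4 f5 => x [a b]; exact: h.
Qed.

Lemma lmaxl (R : realType) (x y : R) : x <= Num.max x y.
Proof. by rewrite le_max lexx. Qed.
Lemma lmaxr (R : realType) (x y : R) : y <= Num.max x y.
Proof. by rewrite le_max lexx orbT. Qed.

Section S.
Context (d : measure_display) (Omega : measurableType d) (R : realType)
        (P : probability Omega R).

Lemma GmeasE (G : set (set Omega)) (Y : Omega -> R) : sigma_algebra setT G ->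
  G_meas G Y <-> measurable_fun setT (Y : g_sigma_algebraType G -> R).
Proof.
move=> sG; rewrite /G_meas; split.
- move=> h _ B mB; rewrite setTI measurable_g_measurableTypeE //; exact: h.
- move=> h B mB; have := h measurableT B mB.
  by rewrite setTI measurable_g_measurableTypeE.
Qed.
Section Gm.
Variables (G : set (set Omega)) (sG : sigma_algebra setT G).
Implicit Types Y Z : Omega -> R.

Lemma Gm_N Y : G_meas G Y -> G_meas G (fun w => - Y w).
Proof.
rewrite !GmeasE // => h.
exact: measurable_funN.
Qed.

Lemma Gm_D Y Z : G_meas G Y -> G_meas G Z -> G_meas G (fun w => Y w + Z w).
Proof. rewrite !GmeasE // => h1 h2; exact: measurable_funD. Qed.

Lemma Gm_M Y Z : G_meas G Y -> G_meas G Z -> G_meas G (fun w => Y w * Z w).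
Proof. rewrite !GmeasE // => h1 h2; exact: measurable_funM. Qed.

Lemma Gm_max0 Y : G_meas G Y -> G_meas G (fun w => Num.max (Y w) 0).
Proof.
rewrite !GmeasE // => h1; apply: measurable_maxr => //; exact: measurable_cst.
Qed.

Lemma Gm_cst (c : R) : G_meas G (fun _ => c).
Proof. rewrite !GmeasE //; exact: measurable_cst. Qed.

Lemma Gm_inv1 Y : G_meas G Y -> G_meas G (fun w => (1 + Y w)^-1).
Proof.
move=> h; have := @Gm_D _ _ (Gm_cst 1) h; rewrite !GmeasE // => h2.
exact: (measurableT_comp (@measurable_inv R) h2).
Qed.

End Gm.

Lemma Gm_sub (G G' : set (set Omega)) (Y : Omega -> R) : G `<=` G' -> G_meas G Y -> G_meas G' Y.
Proof. by move=> s h B mB; apply: s; apply: h. Qed.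

Lemma Gm_meas (G : set (set Omega)) (Y : Omega -> R) : G `<=` measurable -> G_meas G Y -> measurable_fun setT Y.
Proof. by move=> s h _ B mB; rewrite setTI; apply: s; apply: h. Qed.
Local Open Scope ereal_scope.
Lemma int_fin_le (f g : Omega -> R) : measurable_fun setT f -> measurable_fun setT g ->
  (forall w, (0 <= f w)%R) -> (forall w, (0 <= g w)%R) ->
  {ae P, forall w, (f w <= g w)%R} ->
  \int[P]_w (g w)%:E < +oo -> \int[P]_w (f w)%:E < +oo.
Proof.
move=> mf mg f0 g0 hfg; apply: le_lt_trans; apply: ae_ge0_le_integral => //.
- by move=> w _; rewrite lee_fin.
- exact/measurable_EFinP.
- by move=> w _; rewrite lee_fin.
- exact/measurable_EFinP.
- by move: hfg; apply: filterS => w h _; rewrite lee_fin.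
Qed.

Lemma mpow (Y : Omega -> R) r : measurable_fun setT Y ->
  measurable_fun setT (fun w => `|Y w| `^ r)%R.
Proof.
move=> mY.
change (measurable_fun setT ((@powR R ^~ r) \o ((@Num.norm R R) \o Y))).
apply: (measurableT_comp (measurable_powR r)).
apply: measurableT_comp => //; exact: normr_measurable.
Qed.

Lemma Lp_le_fin (Y Z : Omega -> R) r : (0 <= r)%R -> measurable_fun setT Y ->
  measurable_fun setT Z -> {ae P, forall w, `|Y w| <= `|Z w|}%R ->
  \int[P]_w (`|Z w| `^ r)%:E < +oo -> \int[P]_w (`|Y w| `^ r)%:E < +oo.
Proof.
move=> r0 mY mZ h; apply: int_fin_le; try exact: mpow.
- by move=> w; exact: powR_ge0.
- by move=> w; exact: powR_ge0.
- move: h; apply: filterS => w h.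
  by apply: (ge0_ler_powR r0) => //; rewrite nnegrE.
Qed.

Local Close Scope ereal_scope.
Lemma pow_add_le (y z r : R) : (0 <= r)%R ->
  (`|y + z| `^ r <= 2 `^ r * (`|y| `^ r + `|z| `^ r))%R.
Proof.
move=> r0.
have key : forall a b : R, (`|a| <= `|b|)%R ->
    (`|a + b| `^ r <= 2 `^ r * (`|a| `^ r + `|b| `^ r))%R.
  move=> a b ab.
  have h1 : (`|a + b| <= 2 * `|b|)%R.
    by apply: (le_trans (ler_normD _ _)); rewrite mulr2n mulrDl mul1r lerD2r.
  apply: (le_trans (ge0_ler_powR r0 _ _ h1)); rewrite ?nnegrE ?mulr_ge0 //.
  rewrite powRM // ler_wpM2l ?powR_ge0 // lerDr powR_ge0 //.
have [yz|zy] := leP `|y| `|z|; first exact: key.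
by rewrite addrC [X in (_ <= _ * X)%R]addrC; apply: key; apply: ltW.
Qed.
Section LpS.
Variables (G : set (set Omega)) (sG : sigma_algebra setT G) (GM : G `<=` measurable).
Variable p : \bar R.
Hypothesis p0 : (0 <= p)%E.
Implicit Types Y Z : Omega -> R.

Lemma Lp_sub G' Y : G `<=` G' -> Lp P G p Y -> Lp P G' p Y.
Proof. by move=> s [h1 h2]; split => //; exact: Gm_sub h1. Qed.

Lemma Lp_N Y : Lp P G p Y -> Lp P G p (fun w => - Y w).
Proof.
move=> [h1 h2]; split; first exact (Gm_N sG h1).
have mY := Gm_meas (G:=G) (Y:=Y) GM h1.
case: p h2 => [r| |] //=.
- move=> h r0; apply: (Lp_le_fin (ltW r0) _ mY _ (h r0)).
  + exact: measurable_funN.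
  + by apply: aeW => w; rewrite normrN.
- by move=> [M hM]; exists M; move: hM; apply: filterS => w; rewrite normrN.
Qed.

Lemma Lp_max0 Y : Lp P G p Y -> Lp P G p (fun w => Num.max (Y w) 0).
Proof.
move=> [h1 h2]; split; first exact (Gm_max0 sG h1).
have mY := Gm_meas (G:=G) (Y:=Y) GM h1.
have hle : forall w, `|Num.max (Y w) 0| <= `|Y w|.
  move=> w; have [h|h] := leP (Y w) 0.
    by rewrite normr0 normr_ge0.
  by [].
case: p h2 => [r| |] //=.
- move=> h r0; apply: (Lp_le_fin (ltW r0) _ mY _ (h r0)).
  + exact (Gm_meas GM (Gm_max0 sG h1)).
  + exact: aeW.
- move=> [M hM]; exists M; move: hM; apply: filterS => w h.
  exact: le_trans (hle w) h.
Qed.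

Lemma Lp_cst0 : Lp P G p (fun _ => 0).
Proof.
split; first exact (Gm_cst sG 0).
case: p p0 => [r| |] //= _.
- move=> r0; rewrite (_ : (fun w => _) = fun _ => 0%E); last first.
    by apply: funext => w; rewrite normr0 powR0 // gt_eqF.
  by rewrite integral0_eq // ltry.
- by exists 0; apply: aeW => w; rewrite normr0.
Qed.

Lemma Lp_D Y Z : Lp P G p Y -> Lp P G p Z -> Lp P G p (fun w => Y w + Z w).
Proof.
move=> [h1 h2] [k1 k2]; split; first exact (Gm_D sG h1 k1).
have mY := Gm_meas GM h1; have mZ := Gm_meas GM k1.
case: p p0 h2 k2 => [r| |] //= _.
- move=> hY hZ r0.
  have r0' := ltW r0.
  apply: (@int_fin_le _ (fun w => 2 `^ r * (`|Y w| `^ r + `|Z w| `^ r))).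
  + exact: mpow (measurable_funD mY mZ).
  + apply: measurable_funM; first exact: measurable_cst.
    by apply: measurable_funD; exact: mpow.
  + by move=> w; exact: powR_ge0.
  + by move=> w; rewrite mulr_ge0 ?addr_ge0 ?powR_ge0.
  + by apply: aeW => w; exact: pow_add_le.
  rewrite (_ : (fun w => _) = fun w => ((2 `^ r)%:E * ((`|Y w| `^ r)%:E + (`|Z w| `^ r)%:E))%E); last first.
    by apply: funext => w; rewrite EFinM EFinD.
  rewrite ge0_integralZl_EFin //; last 2 first.
  + by move=> w _; rewrite adde_ge0 // lee_fin powR_ge0.
  + by apply: emeasurable_funD; apply/measurable_EFinP; exact: mpow.
  rewrite ge0_integralD //; last 2 first.
  + by apply/measurable_EFinP; exact: mpow.
  + by apply/measurable_EFinP; exact: mpow.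
  apply: lte_mul_pinfty; [by rewrite lee_fin powR_ge0 | by [] | ].
  exact: lte_add_pinfty (hY r0) (hZ r0).
- move=> [M1 hM1] [M2 hM2]; exists (M1 + M2); move: hM1 hM2.
  apply: filterS2 => w a b; apply: le_trans (ler_normD _ _) _; exact: lerD.
Qed.

Lemma Lp_scale c Y : G_meas G c -> {ae P, forall w, `|c w| <= 1} ->
  Lp P G p Y -> Lp P G p (fun w => c w * Y w).
Proof.
move=> hc c1 [h1 h2]; split; first exact (Gm_M sG hc h1).
have mY := Gm_meas GM h1; have mc := Gm_meas GM hc.
have hle : {ae P, forall w, `|c w * Y w| <= `|Y w|}.
  by move: c1; apply: filterS => w h; rewrite normrM ler_piMl.
case: p p0 h2 => [r| |] //= _.
- move=> h r0; apply: (Lp_le_fin (ltW r0) _ mY hle (h r0)).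
  exact: measurable_funM.
- move=> [M hM]; exists M; move: hle hM; apply: filterS2 => w a b.
  exact: le_trans a b.
Qed.
End LpS.

Section Main.
Variables (T : nat) (F : nat -> set (set Omega)) (p : \bar R)
  (Rm U : nat -> (Omega -> R) -> (Omega -> R)) (eta : nat -> Omega -> R).
Hypotheses (hF : is_filtration T F) (p0 : (0 <= p)%E)
  (hR : dyn_risk_measure P T F p Rm) (hU : dyn_utility P T F p U)
  (heta : forall t, (t < T)%N -> G_meas (F t) (eta t) /\ {ae P, forall w, 0 < eta t w}).

Lemma sF s : (s <= T)%N -> sigma_algebra setT (F s).
Proof. by case: hF => h _ _ _; exact: h. Qed.

Lemma Fmono s t : (s <= t)%N -> (t <= T)%N -> F s `<=` F t.
Proof. by case: hF => _ _ h _; exact: h. Qed.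

Lemma FM s : (s <= T)%N -> F s `<=` measurable.
Proof.
case: hF => _ _ h e hs; rewrite -e; exact: h.
Qed.

Implicit Types Y Z : Omega -> R.

Lemma LN s Y : (s <= T)%N -> Lp P (F s) p Y -> Lp P (F s) p (fun w => - Y w).
Proof. by move=> hs; apply: (Lp_N (sF hs) (FM hs)). Qed.
Lemma LD s Y Z : (s <= T)%N -> Lp P (F s) p Y -> Lp P (F s) p Z ->
  Lp P (F s) p (fun w => Y w + Z w).
Proof. by move=> hs; apply: (Lp_D (sF hs) (FM hs) p0). Qed.
Lemma LM s Y : (s <= T)%N -> Lp P (F s) p Y -> Lp P (F s) p (fun w => Num.max (Y w) 0).
Proof. by move=> hs; apply: (Lp_max0 (sF hs) (FM hs)). Qed.
Lemma L0 s : (s <= T)%N -> Lp P (F s) p (fun _ => 0).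
Proof. by move=> hs; apply: (Lp_cst0 (sF hs) p0). Qed.
Lemma Lsub s t Y : (s <= t)%N -> (t <= T)%N -> Lp P (F s) p Y -> Lp P (F t) p Y.
Proof. by move=> h1 h2; apply: Lp_sub; exact: Fmono. Qed.

Lemma c_bound t : (t < T)%N ->
  {ae P, forall w, 0 <= (1 + eta t w)^-1 /\ (1 + eta t w)^-1 <= 1}.
Proof.
move=> ht; move: (heta ht).2; apply: filterS => w h.
have h1 : 1 <= 1 + eta t w by rewrite lerDl ltW.
have h0 : 0 < 1 + eta t w by apply: lt_le_trans h1.
by rewrite invr_ge0 ltW // invf_le1.
Qed.

Lemma R_ae t Y Y' : (t < T)%N -> Lp P (F t.+1) p Y -> Lp P (F t.+1) p Y' ->
  {ae P, forall w, Y w = Y' w} -> {ae P, forall w, Rm t Y w = Rm t Y' w}.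
Proof.
move=> ht h1 h2 e; case: (hR ht) => _ _ hm _.
have a : {ae P, forall w, Y w <= Y' w} by move: e; apply: filterS => w ->.
have b : {ae P, forall w, Y' w <= Y w} by move: e; apply: filterS => w ->.
move: (hm _ _ h1 h2 a) (hm _ _ h2 h1 b); apply: filterS2 => w x y.
by apply/eqP; rewrite eq_le x y.
Qed.

Lemma U_ae t Y Y' : (t < T)%N -> Lp P (F t.+1) p Y -> Lp P (F t.+1) p Y' ->
  {ae P, forall w, Y w = Y' w} -> {ae P, forall w, U t Y w = U t Y' w}.
Proof.
move=> ht h1 h2 e; case: (hU ht) => _ _ hm _.
have a : {ae P, forall w, Y w <= Y' w} by move: e; apply: filterS => w ->.
have b : {ae P, forall w, Y' w <= Y w} by move: e; apply: filterS => w ->.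
move: (hm _ _ h1 h2 a) (hm _ _ h2 h1 b); apply: filterS2 => w x y.
by apply/eqP; rewrite eq_le x y.
Qed.

Definition W := Wop Rm U eta.

Lemma W_Lp t Y : (t < T)%N -> Lp P (F t.+1) p Y -> Lp P (F t) p (W t Y).
Proof.
move=> ht hY.
have hT1 : (t.+1 <= T)%N by [].
have hT0 : (t <= T)%N by apply: ltnW.
have hN := LN hT1 hY.
have [hRa _ _ _] := hR ht; have hRo := hRa _ hN.
have hR1 := Lsub (leqnSn t) hT1 hRo.
have hM := LM hT1 (LD hT1 hR1 (LN hT1 hY)).
have [hUa _ _ _] := hU ht; have hUo := hUa _ hM.
have hS := Lp_scale (sF hT0) (FM hT0) p0 (Gm_inv1 (sF hT0) (heta ht).1) _ hUo.
have := LD hT0 hRo (LN hT0 (hS _)).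
apply.
move: (c_bound ht); apply: filterS => w [a b].
by rewrite ger0_norm.
Qed.

Lemma W_mono t Y Y' : (t < T)%N -> Lp P (F t.+1) p Y -> Lp P (F t.+1) p Y' ->
  {ae P, forall w, Y w <= Y' w} -> {ae P, forall w, W t Y w <= W t Y' w}.
Proof.
move=> ht hY hY' hle.
have hT1 : (t.+1 <= T)%N by [].
have hT0 : (t <= T)%N by apply: ltnW.
have [hRa _ hRm _] := hR ht.
have [hUa hUb hUm _] := hU ht.
pose a := Rm t (fun x => - Y x).
pose a' := Rm t (fun x => - Y' x).
have ha : Lp P (F t) p a := hRa _ (LN hT1 hY).
have ha' : Lp P (F t) p a' := hRa _ (LN hT1 hY').
have ha1 := Lsub (leqnSn t) hT1 ha.
have ha1' := Lsub (leqnSn t) hT1 ha'.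
have hi : {ae P, forall w, a w <= a' w}.
  apply: hRm; [exact: LN hT1 hY'|exact: LN hT1 hY|].
  by move: hle; apply: filterS => w h; rewrite lerN2.
have argA : Lp P (F t.+1) p (fun x => Num.max (a x - Y x) 0) :=
  LM hT1 (LD hT1 ha1 (LN hT1 hY)).
have argA' : Lp P (F t.+1) p (fun x => Num.max (a' x - Y' x) 0) :=
  LM hT1 (LD hT1 ha1' (LN hT1 hY')).
have argB : Lp P (F t.+1) p (fun x => Num.max (a x - Y' x) 0) :=
  LM hT1 (LD hT1 ha1 (LN hT1 hY')).
have hd : Lp P (F t) p (fun x => a' x - a x) := LD hT0 ha' (LN hT0 ha).
have argBd : Lp P (F t.+1) p (fun x => Num.max (a x - Y' x) 0 + (a' x - a x)) :=
  LD hT1 argB (Lsub (leqnSn t) hT1 hd).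
have hii : {ae P, forall w, U t (fun x => Num.max (a x - Y' x) 0) w <=
                           U t (fun x => Num.max (a x - Y x) 0) w}.
  apply: hUm => //; move: hle; apply: filterS => w h.
  rewrite ge_max; apply/andP; split; last exact: lmaxr.
  by apply: le_trans (lmaxl (a w - Y w) 0); rewrite lerD2l lerN2.
have hiii : {ae P, forall w, U t (fun x => Num.max (a' x - Y' x) 0) w <=
            U t (fun x => Num.max (a x - Y' x) 0 + (a' x - a x)) w}.
  apply: hUm => //; move: hi; apply: filterS => w h.
  rewrite ge_max; apply/andP; split.
    have := lmaxl (a w - Y' w) 0; lra.
  have := lmaxr (a w - Y' w) 0; lra.
have hiv : {ae P, forall w, U t (fun x => Num.max (a x - Y' x) 0 + (a' x - a x)) w =
            U t (fun x => Num.max (a x - Y' x) 0) w + (a' w - a w)}.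
  exact: (hUb _ _ argB hd).
move: (c_bound ht) hi hii hiii hiv; apply: filterS5 => w [c0 c1] e1 e2 e3 e4.
rewrite /W /Wop -/a -/a'.
rewrite e4 in e3.
set c := (1 + eta t w)^-1 in c0 c1 *.
set A := U t (fun x => Num.max (a x - Y x) 0) w in e2 *.
set A' := U t (fun x => Num.max (a' x - Y' x) 0) w in e3 *.
set B := U t (fun x => Num.max (a x - Y' x) 0) w in e2 e3 *.
have h1 : c * A' <= c * (B + (a' w - a w)) by rewrite ler_wpM2l.
have h2 : 0 <= c * (A - B) by rewrite mulr_ge0 // subr_ge0.
have h3 : 0 <= (1 - c) * (a' w - a w) by rewrite mulr_ge0 // subr_ge0.
nra.
Qed.

Lemma W_ae t Y Y' : (t < T)%N -> Lp P (F t.+1) p Y -> Lp P (F t.+1) p Y' ->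
  {ae P, forall w, Y w = Y' w} -> {ae P, forall w, W t Y w = W t Y' w}.
Proof.
move=> ht h1 h2 e.
have a : {ae P, forall w, Y w <= Y' w} by move: e; apply: filterS => w ->.
have b : {ae P, forall w, Y' w <= Y w} by move: e; apply: filterS => w ->.
move: (W_mono ht h1 h2 a) (W_mono ht h2 h1 b); apply: filterS2 => w x y.
by apply/eqP; rewrite eq_le x y.
Qed.

Lemma W_cash t Y m : (t < T)%N -> Lp P (F t.+1) p Y -> Lp P (F t) p m ->
  {ae P, forall w, W t (fun x => Y x + m x) w = W t Y w + m w}.
Proof.
move=> ht hY hm.
have hT1 : (t.+1 <= T)%N by [].
have hT0 : (t <= T)%N by apply: ltnW.
have [hRa hRb _ _] := hR ht.
have hm1 := Lsub (leqnSn t) hT1 hm.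
have e : (fun x => - (Y x + m x)) = (fun x => - Y x + - m x).
  by apply: funext => x; rewrite opprD.
have hYm : Lp P (F t.+1) p (fun x => Y x + m x) := LD hT1 hY hm1.
have ha : Lp P (F t) p (Rm t (fun x => - Y x)) := hRa _ (LN hT1 hY).
have ham : Lp P (F t) p (Rm t (fun x => - (Y x + m x))) := hRa _ (LN hT1 hYm).
have hc : {ae P, forall w, Rm t (fun x => - (Y x + m x)) w =
                           Rm t (fun x => - Y x) w + m w}.
  rewrite e; move: (hRb _ _ (LN hT1 hY) (LN hT0 hm)); apply: filterS => w ->.
  by rewrite opprK.
have arg1 : Lp P (F t.+1) p
    (fun x => Num.max (Rm t (fun y => - (Y y + m y)) x - (Y x + m x)) 0) :=
  LM hT1 (LD hT1 (Lsub (leqnSn t) hT1 ham) (LN hT1 hYm)).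
have arg2 : Lp P (F t.+1) p
    (fun x => Num.max (Rm t (fun y => - Y y) x - Y x) 0) :=
  LM hT1 (LD hT1 (Lsub (leqnSn t) hT1 ha) (LN hT1 hY)).
have hu := U_ae ht arg1 arg2.
have hu' : {ae P, forall w,
   U t (fun x => Num.max (Rm t (fun y => - (Y y + m y)) x - (Y x + m x)) 0) w =
   U t (fun x => Num.max (Rm t (fun y => - Y y) x - Y x) 0) w}.
  apply: hu; move: hc; apply: filterS => w ->.
  by congr (Num.max _ 0); ring.
move: hc hu'; apply: filterS2 => w e1 e2.
rewrite /W /Wop e1 e2; ring.
Qed.

Lemma R0 t : (t < T)%N -> {ae P, forall w, Rm t (fun _ => 0) w = 0}.
Proof.
move=> ht.
have hT0 : (t <= T)%N by apply: ltnW.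
have [_ _ _ hRd] := hR ht.
have e0 : (fun x : Omega => (0:R) * 0) = (fun _ => 0) by apply: funext => x; rewrite mulr0.
have l0 : Lp P (F t.+1) p (fun x : Omega => (0:R) * 0) by rewrite e0; exact: L0.
have := hRd (fun _ => 0) (fun _ => 0) (L0 ht) (L0 hT0) (aeW P (fun _ => lexx 0)) l0.
rewrite e0; apply: filterS => w ->; by rewrite mul0r.
Qed.

Lemma U0 t : (t < T)%N -> {ae P, forall w, U t (fun _ => 0) w = 0}.
Proof.
move=> ht.
have hT0 : (t <= T)%N by apply: ltnW.
have [_ _ _ hRd] := hU ht.
have e0 : (fun x : Omega => (0:R) * 0) = (fun _ => 0) by apply: funext => x; rewrite mulr0.
have l0 : Lp P (F t.+1) p (fun x : Omega => (0:R) * 0) by rewrite e0; exact: L0.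
have := hRd (fun _ => 0) (fun _ => 0) (L0 ht) (L0 hT0) (aeW P (fun _ => lexx 0)) l0.
rewrite e0; apply: filterS => w ->; by rewrite mul0r.
Qed.

Lemma W_zero t : (t < T)%N -> {ae P, forall w, W t (fun _ => 0) w = 0}.
Proof.
move=> ht.
have hT0 : (t <= T)%N by apply: ltnW.
have eN : (fun x : Omega => - (0:R)) = (fun _ => 0) by apply: funext => x; rewrite oppr0.
have r0 := R0 ht.
have arg1 : Lp P (F t.+1) p (fun x => Num.max (Rm t (fun _ => 0) x - 0) 0).
  have [hRa _ _ _] := hR ht.
  exact: LM ht (LD ht (Lsub (leqnSn t) ht (hRa _ (L0 ht))) (LN ht (L0 ht))).
have hu : {ae P, forall w, U t (fun x => Num.max (Rm t (fun _ => 0) x - 0) 0) w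
                           = U t (fun _ => 0) w}.
  apply: U_ae ht arg1 (L0 ht) _.
  by move: r0; apply: filterS => w ->; rewrite subr0 maxxx.
move: r0 hu (U0 ht); apply: filterS3 => w e1 e2 e3.
rewrite /W /Wop eN e1 e2 e3; ring.
Qed.

Notation Wc := (Wcomp_aux Rm U eta).

Lemma Wc_Lp k t Y : (t + k <= T)%N -> Lp P (F (t + k)) p Y -> Lp P (F t) p (Wc k t Y).
Proof.
elim: k t => [|k IH] t htk hY; first by move: hY; rewrite addn0.
have ht : (t < T)%N by lia.
apply: (W_Lp ht); apply: IH; first by lia.
by rewrite addSnnS.
Qed.

Lemma Wc_mono k t Y Y' : (t + k <= T)%N -> Lp P (F (t + k)) p Y ->
  Lp P (F (t + k)) p Y' -> {ae P, forall w, Y w <= Y' w} ->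
  {ae P, forall w, Wc k t Y w <= Wc k t Y' w}.
Proof.
elim: k t => [|k IH] t htk hY hY' hle; first by [].
have ht : (t < T)%N by lia.
have htk' : (t.+1 + k <= T)%N by lia.
rewrite -addSnnS in hY hY'.
apply: (W_mono ht); [exact: Wc_Lp|exact: Wc_Lp|exact: IH].
Qed.

Lemma Wc_cash k t Y m : (t + k <= T)%N -> Lp P (F (t + k)) p Y -> Lp P (F t) p m ->
  {ae P, forall w, Wc k t (fun x => Y x + m x) w = Wc k t Y w + m w}.
Proof.
elim: k t => [|k IH] t htk hY hm; first by apply: aeW.
have ht : (t < T)%N by lia.
have htk' : (t.+1 + k <= T)%N by lia.
rewrite -addSnnS in hY.
have hm1 : Lp P (F t.+1) p m := Lsub (leqnSn t) ht hm.
have hmk : Lp P (F (t.+1 + k)) p m := Lsub (leq_addr k t.+1) htk' hm1.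
have l1 : Lp P (F t.+1) p (Wc k t.+1 (fun x => Y x + m x)).
  by apply: Wc_Lp => //; exact: LD.
have l2 : Lp P (F t.+1) p (Wc k t.+1 Y) by exact: Wc_Lp.
have l3 : Lp P (F t.+1) p (fun x => Wc k t.+1 Y x + m x) by exact: LD.
have e1 := W_ae ht l1 l3 (IH _ htk' hY hm1).
move: e1 (W_cash ht l2 hm); apply: filterS2 => w e1 e2.
by rewrite /= -/W e1 e2.
Qed.

Lemma Wc_zero k t : (t + k <= T)%N -> {ae P, forall w, Wc k t (fun _ => 0) w = 0}.
Proof.
elim: k t => [|k IH] t htk; first by apply: aeW.
have ht : (t < T)%N by lia.
have htk' : (t.+1 + k <= T)%N by lia.
have l1 : Lp P (F t.+1) p (Wc k t.+1 (fun _ => 0)) by apply: Wc_Lp => //; exact: L0.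
have e1 := W_ae ht l1 (L0 ht) (IH _ htk').
move: e1 (W_zero ht); apply: filterS2 => w e1 e2.
by rewrite /= -/W e1 e2.
Qed.

Lemma Wc_split a b t Y : Wc (a + b) t Y = Wc a t (Wc b (t + a) Y).
Proof.
elim: a t => [|a IH] t /=; first by rewrite addn0.
by rewrite IH addSnnS.
Qed.


Lemma W_id t Z : (t < T)%N -> Lp P (F t) p Z -> {ae P, forall w, W t Z w = Z w}.
Proof.
move=> ht hZ.
have hT0 : (t <= T)%N by apply: ltnW.
have [hRa hRb _ _] := hR ht.
have hZ1 := Lsub (leqnSn t) ht hZ.
have eZ : (fun x => - Z x) = (fun x => (fun _ => 0) x + (fun x => - Z x) x).
  by apply: funext => x; rewrite add0r.
have hr : {ae P, forall w, Rm t (fun x => - Z x) w = Z w}.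
  rewrite eZ; move: (hRb _ _ (L0 ht) (LN hT0 hZ)) (R0 ht).
  by apply: filterS2 => w -> ->; rewrite sub0r opprK.
have hRZ : Lp P (F t) p (Rm t (fun x => - Z x)) := hRa _ (LN ht hZ1).
have arg1 : Lp P (F t.+1) p (fun x => Num.max (Rm t (fun y => - Z y) x - Z x) 0) :=
  LM ht (LD ht (Lsub (leqnSn t) ht hRZ) (LN ht hZ1)).
have hu : {ae P, forall w, U t (fun x => Num.max (Rm t (fun y => - Z y) x - Z x) 0) w
                           = U t (fun _ => 0) w}.
  apply: U_ae ht arg1 (L0 ht) _.
  by move: hr; apply: filterS => w ->; rewrite subrr maxxx.
move: hr hu (U0 ht); apply: filterS3 => w e1 e2 e3.
rewrite /W /Wop e1 e2 e3; ring.
Qed.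

Lemma Wc_ae k t Y Y' : (t + k <= T)%N -> Lp P (F (t + k)) p Y ->
  Lp P (F (t + k)) p Y' -> {ae P, forall w, Y w = Y' w} ->
  {ae P, forall w, Wc k t Y w = Wc k t Y' w}.
Proof.
move=> htk h1 h2 e.
have a : {ae P, forall w, Y w <= Y' w} by move: e; apply: filterS => w ->.
have b : {ae P, forall w, Y' w <= Y w} by move: e; apply: filterS => w ->.
move: (Wc_mono htk h1 h2 a) (Wc_mono htk h2 h1 b); apply: filterS2 => w x y.
by apply/eqP; rewrite eq_le x y.
Qed.

Lemma Wc_id k t Z : (t + k <= T)%N -> Lp P (F t) p Z -> {ae P, forall w, Wc k t Z w = Z w}.
Proof.
elim: k t => [|k IH] t htk hZ; first by apply: aeW.
have ht : (t < T)%N by lia.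
have htk' : (t.+1 + k <= T)%N by lia.
have hZ1 : Lp P (F t.+1) p Z := Lsub (leqnSn t) ht hZ.
have hZk : Lp P (F (t.+1 + k)) p Z := Lsub (leq_addr k t.+1) htk' hZ1.
have l1 : Lp P (F t.+1) p (Wc k t.+1 Z) by exact: Wc_Lp.
move: (W_ae ht l1 hZ1 (IH _ htk' hZ1)) (W_id ht hZ); apply: filterS2 => w e1 e2.
by rewrite /= -/W e1 e2.
Qed.
Lemma main_in t : (1 <= t <= T)%N ->
  [/\ (forall X, in_Rp P T F p t X -> Lp P (F t) p (phi Rm U eta T t X)),
      {ae P, forall w, phi Rm U eta T t (fun _ _ => 0) w = 0},
      (forall X X2, in_Rp P T F p t X -> in_Rp P T F p t X2 ->
         (forall s, (1 <= s <= T)%N -> {ae P, forall w, X s w <= X2 s w}) ->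
         {ae P, forall w, phi Rm U eta T t X w <= phi Rm U eta T t X2 w}),
      (forall X m, in_Rp P T F p t X -> Lp P (F t) p m ->
         {ae P, forall w, phi Rm U eta T t (proc_add X (ind_cc t T m)) w
                          = phi Rm U eta T t X w + m w}) &
      (forall u X, (t <= u <= T)%N -> in_Rp P T F p t X ->
         {ae P, forall w, phi Rm U eta T t X w
            = phi Rm U eta T t
                (proc_add (proc_co t u X) (ind_cc u T (phi Rm U eta T u X))) w})].
Proof.
move=> /andP[h1t htT].
have hk : (t + (T - t) = T)%N by lia.
have hkT : (t + (T - t) <= T)%N by lia.
have h1T : (1 <= T <= T)%N by rewrite leqnn andbT; lia.
have getT : forall X, in_Rp P T F p t X -> Lp P (F (t + (T - t))) p (fun x => - X T x).
  by move=> X hY; rewrite hk; apply: LN => //; case: (hY T h1T).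
split.
- move=> X hY; apply: LN => //; exact: Wc_Lp (getT _ hY).
- rewrite /phi /=.
  have eN : (fun x : Omega => - (0:R)) = (fun _ => 0) by apply: funext => x; rewrite oppr0.
  rewrite eN; move: (Wc_zero hkT); apply: filterS => w ->; by rewrite oppr0.
- move=> X X2 hY hY' hle.
  have h : {ae P, forall w, - X2 T w <= - X T w}.
    by move: (hle T h1T); apply: filterS => w; rewrite lerN2.
  move: (Wc_mono hkT (getT _ hY') (getT _ hY) h); apply: filterS => w.
  by rewrite /phi lerN2.
- move=> X m hY hm.
  have e : (fun x => - proc_add X (ind_cc t T m) T x) = (fun x => - X T x + - m x).
    apply: funext => x; rewrite /proc_add /ind_cc htT leqnn /=.
    by rewrite opprD.
  have hm' : Lp P (F t) p (fun x => - m x) by apply: LN.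
  have := Wc_cash hkT (getT _ hY) hm'.
  rewrite /phi e; apply: filterS => w ->; ring.
- move=> u X /andP[htu huT] hX.
  have e : (fun x => - proc_add (proc_co t u X) (ind_cc u T (phi Rm U eta T u X)) T x)
         = Wc (T - u) u (fun x => - X T x).
    apply: funext => x; rewrite /proc_add /proc_co /ind_cc /phi.
    have c1 : (t <= T < u)%N = false by apply/negbTE; lia.
    have c2 : (u <= T <= T)%N = true by apply/andP; split.
    by rewrite c1 c2 add0r opprK.
  rewrite /phi e.
  have e2 : (T - t = (u - t) + (T - u))%N by lia.
  have e3 : (t + (u - t) = u)%N by lia.
  rewrite e2 Wc_split e3.
  have hku : (u + (T - u) = T)%N by lia.
  have hV : Lp P (F u) p (Wc (T - u) u (fun x => - X T x)).
    apply: Wc_Lp; first by lia.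
    by rewrite hku; apply: LN => //; case: (hX T h1T).
  have hV' : Lp P (F u) p (Wc (T - u) u (Wc (T - u) u (fun x => - X T x))).
    by apply: Wc_Lp; [lia | rewrite hku; apply: Lsub hV].
  have hut : (t + (u - t) <= T)%N by lia.
  have hid : {ae P, forall w, Wc (T - u) u (fun x => - X T x) w =
      Wc (T - u) u (Wc (T - u) u (fun x => - X T x)) w}.
    have huT' : (u + (T - u) <= T)%N by lia.
    move: (Wc_id huT' hV).
    by apply: filterS => w ->.
  have hV2 : Lp P (F (t + (u - t))) p (Wc (T - u) u (fun x => - X T x)) by rewrite e3.
  have hV2' : Lp P (F (t + (u - t))) p
      (Wc (T - u) u (Wc (T - u) u (fun x => - X T x))) by rewrite e3.
  have := Wc_ae hut hV2 hV2' hid.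
  by apply: filterS => w ->; rewrite Wc_split e3.
Qed.
End Main.
End S.

Unset Implicit Arguments.

Theorem proposition3 (d : measure_display) (Omega : measurableType d)
  (R : realType) (P : probability Omega R) (T : nat)
  (F : nat -> set (set Omega)) (p : \bar R)
  (Rm U : nat -> (Omega -> R) -> (Omega -> R)) (eta : nat -> Omega -> R) :
  (1 <= T)%N ->
  is_filtration T F ->
  (0 <= p)%E ->
  dyn_risk_measure P T F p Rm ->
  dyn_utility P T F p U ->
  (forall t, (t < T)%N -> G_meas (F t) (eta t) /\ {ae P, forall w, 0 < eta t w}) ->
  forall t, (1 <= t <= T)%N ->
  [/\ (forall Y, in_Rp P T F p t Y -> Lp P (F t) p (phi Rm U eta T t Y)),
      {ae P, forall w, phi Rm U eta T t (fun _ _ => 0) w = 0},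
      (forall Y Y', in_Rp P T F p t Y -> in_Rp P T F p t Y' ->
         (forall s, (1 <= s <= T)%N -> {ae P, forall w, Y s w <= Y' s w}) ->
         {ae P, forall w, phi Rm U eta T t Y w <= phi Rm U eta T t Y' w}),
      (forall Y m, in_Rp P T F p t Y -> Lp P (F t) p m ->
         {ae P, forall w, phi Rm U eta T t (proc_add Y (ind_cc t T m)) w
                          = phi Rm U eta T t Y w + m w}) &
      (forall u Y, (t <= u <= T)%N -> in_Rp P T F p t Y ->
         {ae P, forall w, phi Rm U eta T t Y w
            = phi Rm U eta T t
                (proc_add (proc_co t u Y) (ind_cc u T (phi Rm U eta T u Y))) w})].
Proof.
move=> hT hF p0 hR hU heta t ht.
by apply: main_in.
Qed.
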